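(* For every natural number $n>1$, the following sentences are provable in the theory ${\sf TQ}$: $\forall u\exists y\,[\Re_n(y\cdot u)]$; $\forall x,u\exists y\,[x<y\wedge\Re_n(y\cdot u)]$; $\forall z,u\exists y\,[y<z\wedge\Re_n(y\cdot u)]$; $\forall x,z,u\exists y\,[x<z\rightarrow (x<y\wedge y<z\wedge\Re_n(y\cdot u))]$.
   Context: Language $\{<,\times,\square^{-1},\mathbf{1}\}$; $y^n$ abbreviates $y\cdots y$ ($n$ times); for $n\geqslant 1$, $\Re_n(y)$ abbreviates the formula $\exists x\,(y=x^n)$. ${\sf TQ}$ is the theory axiomatized by: ($\texttt{O}_1$) $\forall x,y(x<y\rightarrow\neg(y<x))$; ($\texttt{O}_2$) $\forall x,y,z(x<y\wedge y<z\rightarrow x<z)$; ($\texttt{O}_3$) $\forall x,y(x<y\vee x=y\vee y<x)$; ($\texttt{M}_1$) $\forall x,y,z(x\cdot(y\cdot z)=(x\cdot y)\cdot z)$; ($\texttt{M}_2$) $\forall x(x\cdot\mathbf{1}=x)$; ($\texttt{M}_3$) $\forall x(x\cdot x^{-1}=\mathbf{1})$; ($\texttt{M}_4$) $\forall x,y(x\cdot y=y\cdot x)$; ($\texttt{M}_5$) $\forall x,y,z(x<y\rightarrow x\cdot z<y\cdot z)$; ($\texttt{M}_6$) $\exists y(y\neq\mathbf{1})$; ($\texttt{M}_{10}$) for each $n\geqslant1$: $\forall x,z\exists y(x<z\rightarrow x<y^n\wedge y^n<z)$; ($\texttt{M}_{11}$) for each $n\geqslant 1$, each $q\geqslant1$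 and all natural numbers $m_0,\dots,m_{q-1}>1$: $\forall x_0,\dots,x_{q-1}\exists y\forall z\bigwedge_{j<q,\ m_j\nmid n}(y^n\cdot x_j\neq z^{m_j})$, the conjunction ranging over those $j<q$ for which $m_j$ does not divide $n$. *)

(* Defs.v *)
(* Models of the first-order theory TQ in the language
   {<, *, ^-1, 1}; "provable in TQ" is rendered semantically
   (true in every model of TQ), equivalent by Goedel completeness. *)
From Stdlib Require Import Arith.

Record TQModel := {
  car :> Type;
  lt : car -> car -> Prop;
  mul : car -> car -> car;
  inv : car -> car;
  one : car
}.

(* y^n = y * (y * ... y)  (n copies); y^0 := 1 is never used (n >= 1). *)
Fixpoint pw (M : TQModel) (y : M) (n : nat) : M :=
  match n with
  | 0 => one M
  | 1 => y
  | S k => mul M y (pw M y k)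
  end.

Definition Re (M : TQModel) (n : nat) (y : M) : Prop := exists x, y = pw M x n.

Definition is_TQ (M : TQModel) : Prop :=
  (forall x y : M, lt M x y -> ~ lt M y x) /\
  (forall x y z : M, lt M x y -> lt M y z -> lt M x z) /\
  (forall x y : M, lt M x y \/ x = y \/ lt M y x) /\
  (forall x y z : M, mul M x (mul M y z) = mul M (mul M x y) z) /\
  (forall x : M, mul M x (one M) = x) /\
  (forall x : M, mul M x (inv M x) = one M) /\
  (forall x y : M, mul M x y = mul M y x) /\
  (forall x y z : M, lt M x y -> lt M (mul M x z) (mul M y z)) /\
  (exists y : M, y <> one M) /\
  (forall n : nat, 1 <= n -> forall x z : M, exists y : M,
               lt M x z -> lt M x (pw M y n) /\ lt M (pw M y n) z) /\
  (forall n q : nat, 1 <= n -> 1 <= q ->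
               forall m : nat -> nat, (forall j, j < q -> 1 < m j) ->
               forall xs : nat -> M, exists y : M, forall z : M,
                 forall j, j < q -> ~ Nat.divide (m j) n ->
                   mul M (pw M y n) (xs j) <> pw M z (m j)).

(* Main.v *)
Require Import Defs.
From Stdlib Require Import Arith Lia.

Theorem lemma3 : forall (M : TQModel), is_TQ M -> forall n : nat, 1 < n ->
  (forall u : M, exists y : M, Re M n (mul M y u)) /\
  (forall x u : M, exists y : M, lt M x y /\ Re M n (mul M y u)) /\
  (forall z u : M, exists y : M, lt M y z /\ Re M n (mul M y u)) /\
  (forall x z u : M, exists y : M,
     lt M x z -> lt M x y /\ lt M y z /\ Re M n (mul M y u)).
Proof.
  intros M H n Hn.
  destruct H as (O1 & O2 & O3 & M1 & M2 & M3 & M4 & M5 & M6 & M10 & M11).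
  assert (L1 : forall x, mul M (one M) x = x).
  { intros x. rewrite M4. apply M2. }
  assert (K : forall y u, mul M (mul M y (inv M u)) u = y).
  { intros y u. rewrite <- M1, (M4 (inv M u) u), M3. apply M2. }
  assert (K2 : forall y u, mul M (mul M y u) (inv M u) = y).
  { intros y u. rewrite <- M1, M3. apply M2. }
  assert (D : forall x z u : M, exists y : M,
     lt M x z -> lt M x y /\ lt M y z /\ Re M n (mul M y u)).
  { intros x z u.
    destruct (M10 n ltac:(lia) (mul M x u) (mul M z u)) as [w Hw].
    exists (mul M (pw M w n) (inv M u)). intros Hxz.
    destruct (Hw (M5 _ _ _ Hxz)) as [A B].
    split; [|split].
    - rewrite <- (K2 x u) at 1. apply M5. exact A.
    - rewrite <- (K2 z u) at 1. apply M5. exact B.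
    - exists w. apply K. }
  assert (BC : exists b c : M, lt M (one M) b /\ lt M c (one M)).
  { destruct M6 as [a Ha].
    destruct (O3 a (one M)) as [Hl | [He | Hg]].
    - exists (inv M a), a. split; auto.
      pose proof (M5 _ _ (inv M a) Hl) as P. rewrite M3, L1 in P. exact P.
    - contradiction.
    - exists a, (inv M a). split; auto.
      pose proof (M5 _ _ (inv M a) Hg) as P. rewrite M3, L1 in P. exact P. }
  destruct BC as (b & c & Hb & Hc).
  assert (UP : forall x, lt M x (mul M x b)).
  { intros x. pose proof (M5 _ _ x Hb) as P. rewrite L1, M4 in P. exact P. }
  assert (DN : forall z, lt M (mul M z c) z).
  { intros z. pose proof (M5 _ _ z Hc) as P. rewrite L1, M4 in P. exact P. }
  assert (S2 : forall x u : M, exists y : M, lt M x y /\ Re M n (mul M y u)).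
  { intros x u. destruct (D x (mul M x b) u) as [y Hy].
    destruct (Hy (UP x)) as (A & _ & C). eauto. }
  split; [|split; [exact S2|split; [|exact D]]].
  - intros u. destruct (S2 u u) as [y [_ Hy]]. eauto.
  - intros z u. destruct (D (mul M z c) z u) as [y Hy].
    destruct (Hy (DN z)) as (_ & B & C). eauto.
Qed.
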